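(* Let $M$ be a real $m\times n$ matrix and let $\Lambda_1\geq\dotsb\geq\Lambda_n\geq 0$ be its singular values, i.e. $\Lambda_1^2\geq\dotsb\geq\Lambda_n^2$ are the eigenvalues of $M^TM$. (If $M$ is symmetric, the $\Lambda_i$ are the absolute values of its eigenvalues.) Let $k\leq\min(m,n)$ be a positive integer and let $\vec{\Delta}^{(k)}$ be the vector of all $k\times k$ minors of $M$, arranged in some order. Then, with all implied constants depending only on $m$ and $n$: (i) $\|\vec{\Delta}^{(k)}\|\asymp\Lambda_1\cdots\Lambda_k$, i.e. there are constants $a,A>0$ depending only on $m,n$ with $a\Lambda_1\cdots\Lambda_k\leq\|\vec{\Delta}^{(k)}\|\leq A\Lambda_1\cdots\Lambda_k$. (ii) There is a $k$-dimensional linear subspace $V\subset\mathbb{R}^n$, spanned by $k$ standard basis vectors of $\mathbb{R}^n$, such that $\|M\vec{v}\|\geq a'\|\vec{v}\|\Lambda_k$ for all $\vec{v}\in V$, where $a'>0$ depends only on $m,n$. (iii) There is a constant $a''>0$ depending only on $m,n$ such that for every $C\geq 1$, either there is an $(n-k+1)$-dimensional linear subspace $X\subset\mathbb{R}^n$ with $\|M\vec{X}\|\leq C^{-1}\|\vec{X}\|$ for all $\vec{X}\in X$, or there is a $k$-dimensional linear subspace $V\subset\mathbb{R}^n$, spanned by standard basis vectors of $\mathbb{R}^n$, with $\|M\vec{v}\|\geq a''C^{-1}\|\vec{v}\|$ for all $\vec{v}\in V$.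
   Context: $\|\cdot\|$ denotes the supremum (maximum absolute value of coordinates) norm. *)

(* Defs.v *)
From mathcomp Require Import all_boot all_order all_algebra.
From mathcomp Require Import reals.
Set Implicit Arguments. Unset Strict Implicit. Unset Printing Implicit Defensive.
Import Order.TTheory GRing.Theory Num.Theory.
Local Open Scope ring_scope.

Definition mxsupn {R : realType} {p q : nat} (A : 'M[R]_(p, q)) : R :=
  \big[Num.max/0]_(i < p) \big[Num.max/0]_(j < q) `|A i j|.

Definition incr_sel {k p : nat} (f : {ffun 'I_k -> 'I_p}) : bool :=
  [forall i : 'I_k, forall j : 'I_k, (i < j)%N ==> (f i < f j)%N].

(* Sup norm of the vector of all k x k minors of M: the max over all choices of
   k rows (increasing) and k columns (increasing) of |det of the submatrix|. *)
Definition minors_supn {R : realType} {m n : nat} (k : nat) (M : 'M[R]_(m, n)) : R :=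
  \big[Num.max/0]_(f : {ffun 'I_k -> 'I_m} | incr_sel f)
   \big[Num.max/0]_(g : {ffun 'I_k -> 'I_n} | incr_sel g)
     `|\det (mxsub f g M)|.

(* Lam 0 >= Lam 1 >= ... >= Lam (n-1) >= 0 are the singular values of M:
   their squares are the eigenvalues (with multiplicity) of M^T M. *)
Definition singular_values {R : realType} {m n : nat} (M : 'M[R]_(m, n))
  (Lam : nat -> R) : Prop :=
  [/\ forall i j, (i <= j < n)%N -> Lam j <= Lam i,
      forall i, (i < n)%N -> 0 <= Lam i &
      char_poly (M^T *m M) = \prod_(i < n) ('X - (Lam i ^+ 2)%:P)].

(* Main.v *)
Require Import Defs.
From mathcomp Require Import all_boot all_order all_algebra all_fingroup.
From mathcomp Require Import reals.
From mathcomp Require Import zify ring lra.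
Import Order.TTheory GRing.Theory Num.Theory.
Local Open Scope ring_scope.
Set Implicit Arguments. Unset Strict Implicit. Unset Printing Implicit Defensive.
Section Arith.
Variable R : realType.

Lemma arith2 (Kl Ku kk nn P' L x Y D D' : R) :
  0 < Kl -> 1 <= Ku -> 0 < P' -> 0 <= L -> 0 <= x -> 0 <= Y -> 0 <= D' ->
  0 <= kk -> kk <= nn -> 0 < nn ->
  P' * L <= Kl * D -> D * x <= kk * D' * Y -> D' <= Ku * P' ->
  Kl^-1 / (nn * Ku) * x * L <= Y.
Proof.
move=> Kl0 Ku1 P0 L0 x0 Y0 D0 kk0 kkn nn0 hL key hU.
have Ku0 : 0 < Ku by apply: lt_le_trans Ku1; exact: ltr01.
have h1 : P' * (L * x) <= P' * (Kl * kk * Ku * Y).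
  have h5 : P' * L * x <= Kl * D * x by rewrite ler_wpM2r.
  rewrite mulrA; apply: le_trans h5 _.
  have h6 : Kl * (D * x) <= Kl * (kk * D' * Y) by rewrite ler_wpM2l // ltW.
  rewrite -mulrA; apply: le_trans h6 _.
  have h3 : kk * D' * Y <= kk * (Ku * P') * Y by rewrite ler_wpM2r // ler_wpM2l.
  have h4 : Kl * (kk * D' * Y) <= Kl * (kk * (Ku * P') * Y) by rewrite ler_wpM2l // ltW.
  apply: le_trans h4 _.
  by rewrite le_eqVlt; apply/orP; left; apply/eqP; ring.
have h2 : L * x <= Kl * kk * Ku * Y by rewrite -(ler_pM2l P0).
have -> : Kl^-1 / (nn * Ku) * x * L = (L * x) / (Kl * (nn * Ku)).
  field; apply/and3P; split; by rewrite gt_eqF.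
rewrite ler_pdivrMr ?mulr_gt0 //; apply: le_trans h2 _.
have -> : Kl * kk * Ku * Y = (Kl * Ku * Y) * kk by ring.
have -> : Y * (Kl * (nn * Ku)) = (Kl * Ku * Y) * nn by ring.
by rewrite ler_wpM2l // !mulr_ge0 // ltW.
Qed.

Lemma arith3 (Kl Ku nn n' P L x r Dj Dj1 C : R) :
  0 < Kl -> 1 <= Ku -> 0 < P -> 0 <= L -> 0 <= x -> 0 <= r -> 0 <= n' -> n' <= nn ->
  0 < nn -> 1 <= C ->
  P <= Kl * Dj -> Dj1 <= Ku * (P * L) -> L <= Kl^-1 / (nn * Ku) / C ->
  r * Dj <= n' * x * Dj1 -> r <= C^-1 * x.
Proof.
move=> Kl0 Ku1 P0 L0 x0 r0 n0 nn' nn0 C1 hL hU hth key.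
have Ku0 : 0 < Ku by apply: lt_le_trans Ku1; exact: ltr01.
have C0 : 0 < C by apply: lt_le_trans C1; exact: ltr01.
set th := Kl^-1 / (nn * Ku) / C.
have hD : Kl^-1 * P <= Dj by rewrite ler_pdivrMl.
have h1 : P * (r * Kl^-1) <= P * (n' * x * Ku * th).
  have -> : P * (r * Kl^-1) = r * (Kl^-1 * P) by ring.
  have e1 : r * (Kl^-1 * P) <= r * Dj by rewrite ler_wpM2l.
  apply: le_trans e1 _; apply: le_trans key _.
  have e2 : n' * x * Dj1 <= n' * x * (Ku * (P * th)).
    rewrite ler_wpM2l ?mulr_ge0 //; apply: le_trans hU _.
    by rewrite ler_pM2l // ler_pM2l.
  apply: le_trans e2 _.
  by rewrite le_eqVlt; apply/orP; left; apply/eqP; ring.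
have h2 : r * Kl^-1 <= n' * x * Ku * th by rewrite -(ler_pM2l P0).
have Kli : 0 < Kl^-1 by rewrite invr_gt0.
rewrite -(ler_pM2r Kli); apply: le_trans h2 _.
have -> : n' * x * Ku * th = (n' / nn) * (x * Kl^-1 / C).
  by rewrite /th; field; rewrite !gt_eqF.
have -> : C^-1 * x * Kl^-1 = 1 * (x * Kl^-1 / C) by ring.
apply: ler_wpM2r; first by rewrite !divr_ge0 // ltW.
by rewrite (ler_pdivrMr _ _ nn0) mul1r.
Qed.
End Arith.
Section S1.
Variable R : realType.

Lemma mxsupn_ge0 p q (A : 'M[R]_(p, q)) : 0 <= mxsupn A.
Proof.
rewrite /mxsupn; elim/big_ind: _ => //; first by move=> x y hx hy; rewrite le_max hx.
move=> i _; elim/big_ind: _ => //; first by move=> x y hx hy; rewrite le_max hx.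
Qed.

Lemma mxsupn_ge p q (A : 'M[R]_(p, q)) i j : `|A i j| <= mxsupn A.
Proof.
rewrite /mxsupn; apply: le_trans (le_bigmax _ _ i).
exact: (le_bigmax _ (fun j => `|A i j|) j).
Qed.

Lemma mxsupn_le p q (A : 'M[R]_(p, q)) c : 0 <= c -> (forall i j, `|A i j| <= c) ->
  mxsupn A <= c.
Proof.
move=> c0 h; rewrite /mxsupn; apply: bigmax_le => // i _; apply: bigmax_le => //.
Qed.
End S1.
Section S2.
Variable R : realType.

Lemma det_row_perm k (s : 'S_k) (A : 'M[R]_k) : \det (row_perm s A) = (-1) ^+ s * \det A.
Proof. by rewrite row_permE det_mulmx det_perm. Qed.

Lemma det_col_perm k (s : 'S_k) (A : 'M[R]_k) : \det (col_perm s A) = (-1) ^+ s * \det A.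
Proof. by rewrite col_permE det_mulmx det_perm odd_permV mulrC. Qed.

Lemma sort_inj k m (h : 'I_k -> 'I_m) : injective h ->
  exists (f : {ffun 'I_k -> 'I_m}) (s : 'S_k), incr_sel f /\ forall i, h i = f (s i).
Proof.
move=> hinj.
pose rk (x : 'I_k) := #|[set y | (h y < h x)%N]|.
have rk_lt x : (rk x < k)%N.
  rewrite -[X in (_ < X)%N]card_ord; apply: proper_card; apply/properP; split.
    by apply/subsetP.
  by exists x => //; rewrite inE ltnn.
have rk_mono x y : (h x < h y)%N -> (rk x < rk y)%N.
  move=> hxy; apply: proper_card; apply/properP; split.
    apply/subsetP => z; rewrite !inE => hz; exact: ltn_trans hz hxy.
  by exists x; rewrite !inE ?ltnn.
pose r (x : 'I_k) : 'I_k := Ordinal (rk_lt x).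
have r_inj : injective r.
  move=> x y /(congr1 val) /= e; apply: hinj; apply: val_inj => /=.
  case: (ltngtP (h x) (h y)) => // /rk_mono; by rewrite e ltnn.
pose s := perm r_inj.
exists [ffun i => h (s^-1 i)%g], s; split; last by move=> i; rewrite ffunE permK.
apply/forallP => i; apply/forallP => j; apply/implyP => ij; rewrite !ffunE.
set a := (h (s^-1 i)%g); set b := h (s^-1 j)%g.
have [//|hl|hl] := ltngtP a b.
  have := rk_mono _ _ hl.
  have -> : rk (s^-1 j)%g = val (s (s^-1 j)%g) by rewrite /s permE.
  have -> : rk (s^-1 i)%g = val (s (s^-1 i)%g) by rewrite /s permE.
  by rewrite !permKV => /(ltn_trans ij); rewrite ltnn.
move/val_inj/hinj/(congr1 s): hl; rewrite !permKV => e; by rewrite e ltnn in ij.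
Qed.

Variables (m n : nat) (M : 'M[R]_(m, n)).

Lemma minors_ge0 k : 0 <= minors_supn k M.
Proof.
rewrite /minors_supn; elim/big_ind: _ => //; first by move=> x y hx hy; rewrite le_max hx.
move=> i _; elim/big_ind: _ => //; first by move=> x y hx hy; rewrite le_max hx.
Qed.

Lemma minors_ge k (f : {ffun 'I_k -> 'I_m}) (g : {ffun 'I_k -> 'I_n}) :
  incr_sel f -> incr_sel g -> `|\det (mxsub f g M)| <= minors_supn k M.
Proof.
move=> hf hg; rewrite /minors_supn.
apply: (bigmax_sup f) => //; exact: (bigmax_sup g).
Qed.

Lemma minors_le k c : 0 <= c ->
  (forall (f : {ffun 'I_k -> 'I_m}) (g : {ffun 'I_k -> 'I_n}),
     incr_sel f -> incr_sel g -> `|\det (mxsub f g M)| <= c) ->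
  minors_supn k M <= c.
Proof.
move=> c0 h; rewrite /minors_supn; apply: bigmax_le => // f hf.
apply: bigmax_le => // g hg; exact: h.
Qed.

Lemma minors_attained k : 0 < minors_supn k M ->
  exists (f : {ffun 'I_k -> 'I_m}) (g : {ffun 'I_k -> 'I_n}),
    [/\ incr_sel f, incr_sel g & minors_supn k M = `|\det (mxsub f g M)|].
Proof.
pose P := fun y : R => y = 0 \/ exists (f : {ffun 'I_k -> 'I_m}) (g : {ffun 'I_k -> 'I_n}),
    [/\ incr_sel f, incr_sel g & y = `|\det (mxsub f g M)|].
suff : P (minors_supn k M).
  move=> hP; rewrite /P in hP; case: hP => [->|//]; by rewrite ltxx.
have Pmax x y : P x -> P y -> P (Num.max x y).
  by move=> hx hy; rewrite /Num.max /Num.Def.maxr; case: ifP.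
rewrite /minors_supn.
apply: (big_ind P); [by left | exact: Pmax | move=> f hf].
apply: (big_ind P); [by left | exact: Pmax | move=> g hg].
by right; exists f, g.
Qed.

Lemma minors_any k (h : 'I_k -> 'I_m) (g : 'I_k -> 'I_n) :
  `|\det (mxsub h g M)| <= minors_supn k M.
Proof.
case: (boolP (injectiveb h)) => [/injectiveP hi|/injectivePn [i1 [i2 ne e]]]; last first.
  rewrite (determinant_alternate ne) ?normr0 ?minors_ge0 // => j.
  by rewrite !mxE e.
case: (boolP (injectiveb g)) => [/injectiveP gi|/injectivePn [i1 [i2 ne e]]]; last first.
  rewrite -det_tr (determinant_alternate ne) ?normr0 ?minors_ge0 // => j.
  by rewrite !mxE e.
have [f [s [fi hs]]] := sort_inj hi.
have [f' [s' [fi' gs]]] := sort_inj gi.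
have -> : mxsub h g M = col_perm s' (row_perm s (mxsub f f' M)).
  by apply/matrixP => i j; rewrite !mxE hs gs.
rewrite det_col_perm det_row_perm !normrMsign; exact: minors_ge.
Qed.
End S2.
Section S3.
Variable R : realType.

Lemma CB1 k p (A : 'M[R]_(k, p)) (B : 'M[R]_(p, k)) :
  \det (A *m B) = \sum_(h : {ffun 'I_k -> 'I_p}) (\prod_i A i (h i)) * \det (rowsub h B).
Proof.
rewrite [LHS]/determinant.
transitivity (\sum_(s : 'S_k) \sum_(h : {ffun 'I_k -> 'I_p})
   (-1) ^+ s * ((\prod_i A i (h i)) * \prod_i B (h i) (s i))).
  apply: eq_bigr => s _; rewrite -big_distrr /=; congr (_ * _).
  rewrite (eq_bigr (fun i => \sum_j A i j * B j (s i))); last by move=> i _; rewrite mxE.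
  rewrite bigA_distr_bigA /=; apply: eq_bigr => h _; by rewrite big_split.
rewrite exchange_big /=; apply: eq_bigr => h _.
rewrite [in RHS]/determinant big_distrr /=; apply: eq_bigr => s _.
rewrite mulrCA; congr (_ * (_ * _)); apply: eq_bigr => i _; by rewrite mxE.
Qed.

Lemma CB2 k p (A : 'M[R]_(k, p)) (B : 'M[R]_(p, k)) :
  k`!%:R * \det (A *m B) =
  \sum_(h : {ffun 'I_k -> 'I_p}) \det (colsub h A) * \det (rowsub h B).
Proof.
transitivity (\sum_(t : 'S_k) \sum_(h : {ffun 'I_k -> 'I_p})
   (-1) ^+ t * (\prod_i A i (h (t i))) * \det (rowsub h B)).
  rewrite mulr_natl -card_Sn -sumr_const; apply: eq_bigr => t _.
  rewrite (reindex_inj (h := fun h' : {ffun 'I_k -> 'I_p} => [ffun j => h' (t^-1 j)%g])); last first.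
    move=> h1 h2 e; apply/ffunP => j; move/ffunP: e => /(_ (t j)).
    by rewrite !ffunE permK.
  rewrite CB1; apply: eq_bigr => h _.
  have -> : rowsub [ffun j => h (t^-1 j)%g] B = row_perm (t^-1)%g (rowsub h B).
    by apply/matrixP => i j; rewrite !mxE ffunE.
  rewrite det_row_perm odd_permV.
  under [in RHS]eq_bigr => i _ do rewrite ffunE permK.
  by rewrite mulrACA -expr2 sqrr_sign mul1r.
rewrite exchange_big; apply: eq_bigr => h _; rewrite [in RHS]/determinant big_distrl /=.
apply: eq_bigr => t _; congr (_ * _ * _); apply: eq_bigr => i _; by rewrite mxE.
Qed.

Lemma CB_sq k p (N : 'M[R]_(p, k)) :
  k`!%:R * \det (N^T *m N) = \sum_(h : {ffun 'I_k -> 'I_p}) \det (rowsub h N) ^+ 2.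
Proof.
rewrite CB2; apply: eq_bigr => h _; rewrite expr2; congr (_ * _).
have -> : colsub h N^T = (rowsub h N)^T by apply/matrixP => i j; rewrite !mxE.
by rewrite det_tr.
Qed.
End S3.
Section S4.
Variable R : realType.

Definition BT n (T : {set 'I_n}) (B : 'M[R]_n) : 'M[R]_n :=
  \matrix_(i, j) if i \in T then B i j else (i == j)%:R.

Lemma prod_split_poly n (J : {set 'I_n}) (b : 'I_n -> R) (d : 'I_n -> bool) :
  \prod_i (if i \in J then - (b i)%:P else 'X *+ d i) =
  ((-1) ^+ #|J| * \prod_i (if i \in J then b i else (d i)%:R))%:P * 'X^(n - #|J|).
Proof.
rewrite (bigID (mem J)) /= [in RHS](bigID (mem J)) /=.
rewrite (eq_bigr (fun i => - (b i)%:P)); last by move=> i ->.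
rewrite [X in _ * X](eq_bigr (fun i => ((d i)%:R)%:P * 'X)); last first.
  by move=> i /negbTE ->; case: (d i); rewrite ?polyC1 ?polyC0 ?mul1r ?mul0r ?mulr1n ?mulr0n.
rewrite [X in _ = (_ * (X * _))%:P * _](eq_bigr (fun i => b i)); last by move=> i ->.
rewrite [X in _ = (_ * (_ * X))%:P * _](eq_bigr (fun i => (d i)%:R)); last first.
  by move=> i /negbTE ->.
rewrite prodrN big_split /= prodr_const.
have -> : #|[pred i | i \notin J]| = (n - #|J|)%N.
  have e1 : #|[pred i | i \notin J]| = #|~: J| by apply: eq_card => i; rewrite !inE.
  have e2 := cardsC J; rewrite card_ord in e2; lia.
rewrite !polyCM !rmorph_prod rmorph_sign /=.
by rewrite -!mulrA; congr (_ * _); rewrite mulrA; congr (_ * _).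
Qed.

Lemma char_poly_expand n (B : 'M[R]_n) :
  char_poly B = \sum_(T : {set 'I_n}) ((-1) ^+ #|T| * \det (BT T B))%:P * 'X^(n - #|T|).
Proof.
rewrite /char_poly /determinant.
transitivity (\sum_(s : 'S_n) \sum_(T : {set 'I_n})
   ((-1) ^+ s * ((-1) ^+ #|T| * \prod_i (if i \in T then B i (s i) else (i == s i)%:R)))%:P
    * 'X^(n - #|T|)).
  apply: eq_bigr => s _.
  rewrite (eq_bigr (fun i => - (B i (s i))%:P + 'X *+ (i == s i))); last first.
    by move=> i _; rewrite !mxE addrC.
  rewrite bigA_distr big_distrr /=; apply: eq_bigr => T _.
  rewrite prod_split_poly [in RHS]polyCM !mulrA; congr (_ * _ * _).
  by rewrite rmorphXn rmorphN1.
rewrite exchange_big /=; apply: eq_bigr => T _.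
rewrite -big_distrl /= -rmorph_sum /=; congr (_%:P * _).
rewrite big_distrr /=; apply: eq_bigr => s _.
rewrite mulrCA; congr (_ * (_ * _)); apply: eq_bigr => i _; by rewrite mxE.
Qed.

Lemma prod_XsubC_expand n (c : 'I_n -> R) :
  \prod_i ('X - (c i)%:P) =
  \sum_(T : {set 'I_n}) ((-1) ^+ #|T| * \prod_(i in T) c i)%:P * 'X^(n - #|T|).
Proof.
rewrite (eq_bigr (fun i => - (c i)%:P + 'X *+ true)); last by move=> i _; rewrite addrC.
rewrite bigA_distr; apply: eq_bigr => T _; rewrite prod_split_poly.
congr ((_ * _)%:P * _).
rewrite [RHS]big_mkcond; apply: eq_bigr => i _; by case: ifP.
Qed.

Lemma coef_expand n k (w : {set 'I_n} -> R) : (k <= n)%N ->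
  (\sum_(T : {set 'I_n}) (w T)%:P * 'X^(n - #|T|))`_(n - k) =
  \sum_(T : {set 'I_n} | #|T| == k) w T.
Proof.
move=> kn; rewrite coef_sum [RHS]big_mkcond /=; apply: eq_bigr => T _.
rewrite coefCM coefXn.
have Tn : (#|T| <= n)%N by rewrite -[X in (_ <= X)%N]card_ord max_card.
have -> : (n - k == n - #|T|)%N = (#|T| == k).
  apply/eqP/eqP => [|->] //; lia.
by case: eqP => _; rewrite ?mulr1 ?mulr0.
Qed.

Lemma minor_sum_eq n k (B : 'M[R]_n) (c : 'I_n -> R) : (k <= n)%N ->
  char_poly B = \prod_i ('X - (c i)%:P) ->
  \sum_(T : {set 'I_n} | #|T| == k) \det (BT T B) =
  \sum_(T : {set 'I_n} | #|T| == k) \prod_(i in T) c i.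
Proof.
move=> kn e.
have := congr1 (fun p : {poly R} => p`_(n - k)) e.
rewrite /= char_poly_expand prod_XsubC_expand !coef_expand // => H.
have sg (F : {set 'I_n} -> R) : \sum_(T : {set 'I_n} | #|T| == k) (-1) ^+ #|T| * F T =
    (-1) ^+ k * \sum_(T : {set 'I_n} | #|T| == k) F T.
  by rewrite big_distrr; apply: eq_bigr => T /eqP ->.
rewrite (sg (fun T => \det (BT T B))) (sg (fun T => \prod_(i in T) c i)) in H.
move/(congr1 (fun x => (-1) ^+ k * x)): H.
by rewrite !mulrA -expr2 sqrr_sign !mul1r.
Qed.
End S4.
Lemma split_lsh m n (i : 'I_m) : split (lshift n i) = inl i.
Proof. exact: (unsplitK (inl _ i)). Qed.
Lemma split_rsh m n (i : 'I_n) : split (rshift m i) = inr i.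
Proof. exact: (unsplitK (inr _ i)). Qed.

Section S5.
Variable R : realType.

Lemma det_mxsub_bij p n (pi : 'I_p -> 'I_n) (A : 'M[R]_n) :
  p = n -> injective pi -> \det (mxsub pi pi A) = \det A.
Proof.
move=> e; subst p => pinj.
have -> : mxsub pi pi A = col_perm (perm pinj) (row_perm (perm pinj) A).
  by apply/matrixP => i j; rewrite !mxE !permE.
by rewrite det_col_perm det_row_perm mulrA -expr2 sqrr_sign mul1r.
Qed.

Lemma det_BT k n (g : 'I_k -> 'I_n) (B : 'M[R]_n) : injective g ->
  \det (BT (g @: [set: 'I_k]) B) = \det (mxsub g g B).
Proof.
move=> ginj; set T := g @: [set: 'I_k].
have gT i : g i \in T by rewrite imset_f ?inE.
pose pi (x : 'I_(k + #|~: T|)) : 'I_n :=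
  match split x with inl i => g i | inr j => enum_val j end.
have piinj : injective pi.
  move=> x y; rewrite /pi -[x]splitK -[y]splitK.
  case: (split x) => [i|i]; case: (split y) => [j|j]; rewrite !unsplitK.
  - by move/ginj => ->.
  - move=> e; have := enum_valP j; by rewrite -e inE gT.
  - move=> e; have := enum_valP i; by rewrite e inE gT.
  - by move/enum_val_inj => ->.
have card_e : (k + #|~: T|)%N = n.
  have := cardsC T; rewrite card_ord /T card_imset // cardsT card_ord //.
rewrite -(det_mxsub_bij (BT T B) card_e piinj).
have -> : mxsub pi pi (BT T B) =
   block_mx (mxsub g g B) (\matrix_(i, j) B (g i) (enum_val j)) 0 1%:M.
  apply/matrixP => x y; rewrite -[x]splitK -[y]splitK.
  case: (split x) => [i|i]; case: (split y) => [j|j];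
    rewrite /= ?block_mxEul ?block_mxEur ?block_mxEdl ?block_mxEdr !mxE /pi /= ?split_lsh ?split_rsh.
  - by rewrite gT.
  - by rewrite gT.
  - have := enum_valP i; rewrite inE => /negbTE ->.
    case: eqP => // e; have := enum_valP i; by rewrite e inE gT.
  - have := enum_valP i; rewrite inE => /negbTE ->.
    by rewrite (inj_eq enum_val_inj).
by rewrite det_ublock det1 mulr1.
Qed.
End S5.
Section S6.
Variable R : realType.

Lemma prod_cmp n k (c : nat -> R) (T : {set 'I_n}) :
  (k <= n)%N -> (forall i, 0 <= c i) -> (forall i j, (i <= j < n)%N -> c j <= c i) ->
  #|T| = k -> \prod_(i in T) c i <= \prod_(i < k) c i.
Proof.
move=> kn c0 cdec cT.
set T0 := [set i : 'I_n | (i < k)%N].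
have -> : \prod_(i < k) c i = \prod_(i in T0) c i.
  rewrite (big_ord_widen n c kn); apply: eq_bigl => i; by rewrite inE.
rewrite (big_setID T0) [X in _ <= X](big_setID T) /= setIC.
apply: ler_wpM2l; first by apply: prodr_ge0.
have cT0 : #|T0| = k.
  have wi : injective (widen_ord kn) by move=> x y /(congr1 val) /= /val_inj.
  rewrite -[in RHS](card_ord k) -(card_imset _ wi).
  apply: eq_card => i; rewrite inE; apply/idP/imsetP => [ik|[j _ ->]] //=.
  by exists (Ordinal ik) => //; apply: val_inj.
have ed : #|T :\: T0| = #|T0 :\: T|.
  have h1 := cardsID T0 T; have h2 := cardsID T T0; rewrite setIC in h2.
  by apply/eqP; rewrite -(eqn_add2l #|T :&: T0|) h1 h2 cT cT0.
case: (posnP k) => [k0|kpos].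
  have Te : T = set0 by apply: cards0_eq; rewrite cT k0.
  have T0e : T0 = set0 by apply: cards0_eq; rewrite cT0 k0.
  by rewrite Te T0e setDv big_set0.
apply: (@le_trans _ _ (c k.-1 ^+ #|T :\: T0|)).
  rewrite -prodr_const; apply: ler_prod => i; rewrite !inE => /andP [ni _].
  rewrite c0 /=; apply: cdec; rewrite ltn_ord andbT; rewrite -ltnNge in ni; lia.
rewrite ed -prodr_const; apply: ler_prod => i; rewrite !inE => /andP [_ ik].
rewrite c0 /=; apply: cdec; lia.
Qed.
End S6.
Section S7.
Variable R : realType.

Lemma sq_le (x y K : R) : 0 <= x -> 0 <= y -> 1 <= K -> x ^+ 2 <= K * y ^+ 2 -> x <= K * y.
Proof.
move=> x0 y0 K1 h.
have K0 : 0 <= K by apply: le_trans K1.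
have Ky : 0 <= K * y by rewrite mulr_ge0.
rewrite -(@ler_sqr _ x (K * y)) ?nnegrE //.
apply: le_trans h _; rewrite exprMn ler_wpM2r ?sqr_ge0 // expr2.
by rewrite -[X in X <= _]mulr1 ler_wpM2l.
Qed.

Lemma sum_sub_le (I : finType) (P : pred I) (F : I -> R) :
  (forall i, 0 <= F i) -> \sum_(i | P i) F i <= \sum_i F i.
Proof.
move=> F0; rewrite [X in _ <= X](bigID P) /= lerDl; apply: sumr_ge0 => i _; exact: F0.
Qed.

Lemma term_le_sum (I : finType) (P : pred I) (F : I -> R) j :
  (forall i, P i -> 0 <= F i) -> P j -> F j <= \sum_(i | P i) F i.
Proof.
move=> F0 Pj; rewrite (bigD1 j) //= lerDl; apply: sumr_ge0 => i /andP [Pi _]; exact: F0.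
Qed.

Lemma card_T0 n k : (k <= n)%N -> #|[set i : 'I_n | (i < k)%N]| = k.
Proof.
move=> kn.
have wi : injective (widen_ord kn) by move=> x y /(congr1 val) /= /val_inj.
rewrite -[in RHS](card_ord k) -(card_imset _ wi).
apply: eq_card => i; rewrite inE; apply/idP/imsetP => [ik|[j _ ->]] //=.
by exists (Ordinal ik) => //; apply: val_inj.
Qed.

Lemma incr_inj k p (f : {ffun 'I_k -> 'I_p}) : incr_sel f -> injective f.
Proof.
move=> /forallP hf x y e; apply/eqP; apply: contraT => ne.
case: (ltngtP x y) => [xy|yx|e']; last by rewrite (val_inj e') eqxx in ne.
- by move: (hf x) => /forallP /(_ y) /implyP /(_ xy); rewrite e ltnn.
- by move: (hf y) => /forallP /(_ x) /implyP /(_ yx); rewrite e ltnn.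
Qed.

Lemma set_enum n k (T : {set 'I_n}) : #|T| = k ->
  exists g : 'I_k -> 'I_n, injective g /\ T = g @: [set: 'I_k].
Proof.
move=> e.
exists (fun i => enum_val (cast_ord (esym e) i)); split.
  by move=> x y /enum_val_inj /(congr1 val) /= /val_inj.
apply/setP => x; apply/idP/imsetP => [xT|[j _ ->]]; last exact: enum_valP.
exists (cast_ord e (enum_rank_in xT x)) => //.
by rewrite cast_ordK enum_rankK_in.
Qed.

Variables (m n : nat) (M : 'M[R]_(m, n)) (Lam : nat -> R).
Hypothesis hsv : singular_values M Lam.

Let B := M^T *m M.

Lemma BT_sq k (g : 'I_k -> 'I_n) : injective g ->
  k`!%:R * \det (BT (g @: [set: 'I_k]) B) =
  \sum_(h : {ffun 'I_k -> 'I_m}) \det (mxsub h g M) ^+ 2.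
Proof.
move=> gi; rewrite det_BT //.
have -> : mxsub g g B = (colsub g M)^T *m colsub g M.
  by apply/matrixP => i j; rewrite !mxE; apply: eq_bigr => l _; rewrite !mxE.
rewrite CB_sq; apply: eq_bigr => h _; congr (\det _ ^+ 2).
by apply/matrixP => i j; rewrite !mxE.
Qed.

Lemma BT_ge0 k (T : {set 'I_n}) : #|T| = k -> 0 <= \det (BT T B).
Proof.
move=> /set_enum [g [gi ->]].
have := BT_sq gi => e.
have kf : 0 < k`!%:R :> R by rewrite ltr0n fact_gt0.
rewrite -(pmulr_rge0 _ kf) e; apply: sumr_ge0 => h _; exact: sqr_ge0.
Qed.

Lemma e_eq k : (k <= n)%N ->
  \sum_(T : {set 'I_n} | #|T| == k) \det (BT T B) =
  \sum_(T : {set 'I_n} | #|T| == k) \prod_(i in T) Lam i ^+ 2.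
Proof.
move=> kn; case: hsv => _ _ hc.
exact: (minor_sum_eq (c := fun i : 'I_n => Lam i ^+ 2)).
Qed.

Lemma Lam_ge0 i : (i < n)%N -> 0 <= Lam i.
Proof. by case: hsv => _ h _; apply: h. Qed.

Lemma prodLam_ge0 k : (k <= n)%N -> 0 <= \prod_(i < k) Lam i.
Proof. move=> kn; apply: prodr_ge0 => i _; apply: Lam_ge0; exact: leq_trans (ltn_ord i) kn. Qed.

Definition Kup := (n`! * #|{set 'I_n}|)%:R : R.
Definition Klow := (#|{set 'I_n}| * (m.+1 ^ n))%:R : R.

Lemma Kup_ge1 : 1 <= Kup.
Proof.
rewrite /Kup ler1n muln_gt0 fact_gt0 /=; apply/card_gt0P; by exists set0.
Qed.

Lemma Klow_ge1 : 1 <= Klow.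
Proof.
rewrite /Klow ler1n muln_gt0 expn_gt0 /=; apply/andP; split => //.
apply/card_gt0P; by exists set0.
Qed.

Lemma minor_upper k : (k <= n)%N -> minors_supn k M <= Kup * \prod_(i < k) Lam i.
Proof.
move=> kn; have P0 := prodLam_ge0 kn.
apply: minors_le; first by rewrite mulr_ge0 // (le_trans ler01 Kup_ge1).
move=> f g hf hg; apply: sq_le => //; first exact: Kup_ge1.
have gi := incr_inj hg.
set T := g @: [set: 'I_k].
have cT : #|T| = k by rewrite card_imset // cardsT card_ord.
rewrite real_normK ?num_real //.
apply: (@le_trans _ _ (\sum_(h : {ffun 'I_k -> 'I_m}) \det (mxsub h g M) ^+ 2)).
  by apply: (term_le_sum (j := f)) => // h _; exact: sqr_ge0.
rewrite -BT_sq //.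
apply: (@le_trans _ _ (k`!%:R * \sum_(T' : {set 'I_n} | #|T'| == k) \det (BT T' B))).
  rewrite ler_wpM2l ?ler0n //; apply: term_le_sum; last by rewrite cT.
  move=> T' /eqP; exact: BT_ge0.
rewrite e_eq //.
apply: (@le_trans _ _ (k`!%:R * \sum_(T' : {set 'I_n} | #|T'| == k) (\prod_(i < k) Lam i) ^+ 2)).
  rewrite ler_wpM2l ?ler0n //; apply: ler_sum => T' /eqP cT'.
  rewrite -prodrXl; apply: (prod_cmp (c := fun i => Lam i ^+ 2)) => //.
    move=> i; exact: sqr_ge0.
  move=> i j /andP [ij jn]; case: hsv => hdec _ _.
  have i_n : (i < n)%N by exact: leq_ltn_trans ij jn.
  rewrite ler_sqr ?nnegrE ?Lam_ge0 //.
  by apply: hdec; rewrite ij jn.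
apply: (@le_trans _ _ (k`!%:R * ((\prod_(i < k) Lam i) ^+ 2 *+ #|{set 'I_n}|))).
  rewrite ler_wpM2l ?ler0n // -sumr_const; apply: sum_sub_le => _; exact: sqr_ge0.
rewrite -[_ ^+ 2 *+ _]mulr_natr mulrCA mulrC ler_wpM2r ?sqr_ge0 //.
by rewrite /Kup natrM ler_wpM2r ?ler0n // ler_nat leq_fact.
Qed.

Lemma minor_lower k : (k <= n)%N -> \prod_(i < k) Lam i <= Klow * minors_supn k M.
Proof.
move=> kn; have P0 := prodLam_ge0 kn.
apply: sq_le => //; [exact: minors_ge0 | exact: Klow_ge1 |].
set D := minors_supn k M.
set T0 := [set i : 'I_n | (i < k)%N].
have cT0 : #|T0| = k by apply: card_T0.
apply: (@le_trans _ _ (\sum_(T : {set 'I_n} | #|T| == k) \prod_(i in T) Lam i ^+ 2)).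
  rewrite -prodrXl (big_ord_widen n (fun i => Lam i ^+ 2) kn).
  rewrite (eq_bigl (fun i => i \in T0)); last by move=> i; rewrite /T0 inE.
  apply: (@term_le_sum _ (fun T : {set 'I_n} => #|T| == k) (fun T => \prod_(i in T) Lam i ^+ 2) T0).
    by move=> T _; apply: prodr_ge0 => i _; exact: sqr_ge0.
  by rewrite cT0.
rewrite -(e_eq kn).
apply: (@le_trans _ _ (\sum_(T : {set 'I_n} | #|T| == k) (D ^+ 2 *+ (m ^ k)))).
  apply: ler_sum => T /eqP cT.
  have [g [gi Te]] := set_enum cT.
  have kf : 1 <= k`!%:R :> R by rewrite ler1n fact_gt0.
  apply: (@le_trans _ _ (k`!%:R * \det (BT T B))).
    by rewrite -[X in X <= _]mul1r ler_wpM2r // (BT_ge0 cT).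
  have cf : #|{ffun 'I_k -> 'I_m}| = (m ^ k)%N by rewrite card_ffun !card_ord.
  rewrite Te BT_sq // -cf -sumr_const.
  apply: ler_sum => h _; rewrite -real_normK ?num_real // ler_sqr ?nnegrE ?normr_ge0 ?minors_ge0 //.
  exact: minors_any.
apply: (@le_trans _ _ (D ^+ 2 *+ (m ^ k) *+ #|{set 'I_n}|)).
  rewrite -sumr_const; apply: sum_sub_le => _; apply: mulrn_wge0; exact: sqr_ge0.
have mk : (m ^ k <= m.+1 ^ n)%N.
  apply: (@leq_trans (m.+1 ^ k)); last exact: leq_pexp2l.
  case: (posnP k) => [->|kp] //; by rewrite leq_exp2r.
rewrite -mulrnA -mulr_natr mulrC /Klow ler_wpM2r ?sqr_ge0 // ler_nat mulnC.
by rewrite leq_mul2l mk orbT.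
Qed.


Definition ext j p (f : 'I_j -> 'I_p) (x : 'I_p) : 'I_j.+1 -> 'I_p :=
  fun i => if unlift ord_max i is Some i' then f i' else x.

Lemma ext_lift j p (f : 'I_j -> 'I_p) x i : ext f x (lift ord_max i) = f i.
Proof. by rewrite /ext liftK. Qed.

Lemma ext_max j p (f : 'I_j -> 'I_p) x : ext f x ord_max = x.
Proof. by rewrite /ext unlift_none. Qed.

Lemma sign_dbl j : (-1) ^+ (j + j)%N = 1 :> R.
Proof. by rewrite exprD -expr2 sqrr_sign. Qed.

Lemma schur_sum j (f : 'I_j -> 'I_m) (g : 'I_j -> 'I_n) (v : 'cV[R]_n) r :
  (forall i, (M *m v) (f i) 0 = 0) ->
  \det (mxsub f g M) * (M *m v) r 0 =
  \sum_c v c 0 * \det (mxsub (ext f r) (ext g c) M).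
Proof.
move=> hv.
pose cof (i : 'I_j.+1) := (-1) ^+ (i + @ord_max j)%N * \det (row' i (mxsub (ext f r) g M)).
have hA c : \det (mxsub (ext f r) (ext g c) M) =
    \sum_i M (ext f r i) c * cof i.
  rewrite (expand_det_col _ ord_max); apply: eq_bigr => i _.
  rewrite !mxE ext_max /cofactor /cof; congr (_ * (_ * \det _)).
  by apply/matrixP => x y; rewrite !mxE ext_lift.
under eq_bigr => c _ do rewrite hA big_distrr /=.
rewrite exchange_big /=.
rewrite (bigD1 ord_max) //= [X in _ + X]big1 ?addr0.
  rewrite /cof sign_dbl mul1r ext_max.
  have -> : row' ord_max (mxsub (ext f r) g M) = mxsub f g M.
    by apply/matrixP => x y; rewrite !mxE ext_lift.
  rewrite mxE big_distrr; apply: eq_bigr => c _ /=; ring.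
move=> i ne; case: (unliftP ord_max i) => [i' ei|ei]; last by rewrite ei eqxx in ne.
transitivity (cof i * (M *m v) (ext f r i) 0).
  rewrite mxE big_distrr; apply: eq_bigr => c _ /=; ring.
by rewrite ei ext_lift hv mulr0.
Qed.

Lemma mxsupn_attained p q (A : 'M[R]_(p, q)) :
  mxsupn A = 0 \/ exists i j, mxsupn A = `|A i j|.
Proof.
pose P := fun y : R => y = 0 \/ exists i j, y = `|A i j|.
have Pmax x y : P x -> P y -> P (Num.max x y).
  by move=> hx hy; rewrite /Num.max /Num.Def.maxr; case: ifP.
rewrite /mxsupn; apply: (big_ind P); [by left | exact: Pmax | move=> i _].
apply: (big_ind P); [by left | exact: Pmax | move=> j _].
by right; exists i, j.
Qed.

Lemma part2_key k' (f : 'I_k'.+1 -> 'I_m) (g : 'I_k'.+1 -> 'I_n) (v : 'cV[R]_n) :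
  injective g -> (forall c, c \notin g @: [set: 'I_k'.+1] -> v c 0 = 0) ->
  `|\det (mxsub f g M)| * mxsupn v <= k'.+1%:R * minors_supn k' M * mxsupn (M *m v).
Proof.
move=> gi hv.
set N := mxsub f g M; set Y := mxsupn (M *m v); set D' := minors_supn k' M.
have Y0 : 0 <= Y by apply: mxsupn_ge0.
have D0 : 0 <= D' by apply: minors_ge0.
have RHS0 : 0 <= k'.+1%:R * D' * Y by rewrite !mulr_ge0.
case: (mxsupn_attained v) => [->|[c [z ->]]]; first by rewrite mulr0.
rewrite (ord1 z).
case: (boolP (c \in g @: [set: 'I_k'.+1])) => [/imsetP [i _ ->]|nc]; last by rewrite hv ?normr0 ?mulr0.
pose u : 'cV[R]_k'.+1 := \col_j v (g j) 0.
pose w : 'cV[R]_k'.+1 := \col_j (M *m v) (f j) 0.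
have hw : w = N *m u.
  apply/matrixP => x y; rewrite (ord1 y) !mxE.
  rewrite (bigID (mem (g @: [set: 'I_k'.+1]))) /= [X in _ + X]big1 ?addr0; last first.
    by move=> c' /hv ->; rewrite mulr0.
  rewrite big_imset /=; last by move=> a b _ _ /gi.
  by apply: eq_big => [a|a _]; rewrite ?inE // !mxE.
have hu : \adj N *m w = \det N *: u by rewrite hw mulmxA mul_adj_mx mul_scalar_mx.
have := congr1 (fun A : 'M[R]_(k'.+1, 1) => A i 0) hu; rewrite /= !mxE => e.
rewrite -normrM -e.
apply: le_trans (ler_norm_sum _ _ _) _.
have eR : k'.+1%:R * D' * Y = \sum_(j < k'.+1) (D' * Y).
  by rewrite sumr_const card_ord -mulrA mulr_natl.
rewrite eR.
apply: ler_sum => j _; rewrite normrM ler_pM ?normr_ge0 //; last by rewrite mxE mxsupn_ge.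
rewrite mxE /cofactor normrMsign.
have -> : row' j (col' i N) = mxsub (fun x => f (lift j x)) (fun x => g (lift i x)) M.
  by apply/matrixP => x y; rewrite !mxE.
exact: minors_any.
Qed.

Definition ap := Klow^-1 / ((n.+1)%:R * Kup).
Definition app := ap * Klow^-1 / ((n.+1)%:R * Kup).

Lemma Klow_gt0 : 0 < Klow. Proof. exact: lt_le_trans ltr01 Klow_ge1. Qed.
Lemma Kup_gt0 : 0 < Kup. Proof. exact: lt_le_trans ltr01 Kup_ge1. Qed.

Lemma ap_gt0 : 0 < ap.
Proof.
by rewrite /ap divr_gt0 ?invr_gt0 ?Klow_gt0 // mulr_gt0 ?ltr0Sn ?Kup_gt0.
Qed.

Lemma app_gt0 : 0 < app.
Proof.
rewrite /app; apply: divr_gt0; apply: mulr_gt0; rewrite ?invr_gt0 ?Klow_gt0 ?ap_gt0 //.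
exact: Kup_gt0.
Qed.

Lemma Lam_dec i j : (i <= j)%N -> (j < n)%N -> Lam j <= Lam i.
Proof. by move=> ij jn; case: hsv => h _ _; apply: h; rewrite ij jn. Qed.

Lemma part2 k : (0 < k)%N -> (k <= minn m n)%N ->
  exists S : {set 'I_n}, #|S| = k /\
    forall v : 'cV[R]_n, (forall i, i \notin S -> v i 0 = 0) ->
      ap * mxsupn v * Lam k.-1 <= mxsupn (M *m v).
Proof.
case: k => [//|k'] _; rewrite leq_min => /andP [km kn] /=.
have L0 : 0 <= Lam k' by apply: Lam_ge0.
case: (eqVneq (Lam k') 0) => [Lz|Lnz].
  exists [set i : 'I_n | (i < k'.+1)%N]; split; first exact: card_T0.
  by move=> v _; rewrite Lz mulr0; exact: mxsupn_ge0.
have Lpos : 0 < Lam k' by rewrite lt_def Lnz L0.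
have Ppos : 0 < \prod_(i < k') Lam i.
  apply: prodr_gt0 => i _; apply: lt_le_trans Lpos _; apply: Lam_dec => //.
  exact: ltnW.
have hL := minor_lower kn; have hU := minor_upper (ltnW kn).
rewrite big_ord_recr /= in hL.
have Dpos : 0 < minors_supn k'.+1 M.
  have : 0 < Klow * minors_supn k'.+1 M by apply: lt_le_trans hL; rewrite mulr_gt0.
  by rewrite pmulr_rgt0 // Klow_gt0.
have [f [g [hf hg eD]]] := minors_attained Dpos.
have gi := incr_inj hg.
exists (g @: [set: 'I_k'.+1]); split; first by rewrite card_imset // cardsT card_ord.
move=> v hv.
have key := part2_key f gi hv; rewrite -eD in key.
apply: (arith2 Klow_gt0 Kup_ge1 Ppos L0 (mxsupn_ge0 v) (mxsupn_ge0 _) (minors_ge0 _ _) _ _ _ hL key hU).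
all: rewrite ?ler0n ?ler_nat ?ltr0Sn //; lia.
Qed.

Lemma part3 k C : (0 < k)%N -> (k <= minn m n)%N -> 1 <= C ->
  (exists X : 'M[R]_n, \rank X = (n - k + 1)%N /\
     forall v : 'cV[R]_n, (v^T <= X)%MS -> mxsupn (M *m v) <= C^-1 * mxsupn v)
  \/
  (exists S : {set 'I_n}, #|S| = k /\
     forall v : 'cV[R]_n, (forall i, i \notin S -> v i 0 = 0) ->
       app * C^-1 * mxsupn v <= mxsupn (M *m v)).
Proof.
move=> k0 kmn C1.
have C0 : 0 < C by apply: lt_le_trans C1; exact: ltr01.
set th := Klow^-1 / ((n.+1)%:R * Kup) / C.
have eth : app * C^-1 = ap * th by rewrite /app /th; ring.
case: (lerP th (Lam k.-1)) => [big|small].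
  right; have [S [cS hS]] := part2 k0 kmn; exists S; split => // v hv.
  apply: le_trans (hS v hv); rewrite eth.
  have a0 := ltW ap_gt0; have x0 := mxsupn_ge0 v.
  move: a0 x0 big; generalize ap th (mxsupn v) (Lam k.-1) => a t x L a0 x0 tL.
  have ax := mulr_ge0 a0 x0; nra.
left.
have th0 : 0 < th.
  rewrite /th; apply: divr_gt0 => //; apply: divr_gt0; first by rewrite invr_gt0 Klow_gt0.
  by apply: mulr_gt0; [exact: ltr0Sn | exact: Kup_gt0].
have exP : exists j, Lam j < th by exists k.-1.
case: (ex_minnP exP) => j Pj jmin.
move: kmn; rewrite leq_min => /andP [km kn].
have jk : (j <= k.-1)%N by apply: jmin.
have jn : (j < n)%N by lia.
have jm : (j <= m)%N by lia.
have Lj0 : 0 <= Lam j by apply: Lam_ge0.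
have Ppos : 0 < \prod_(i < j) Lam i.
  apply: prodr_gt0 => i _; apply: lt_le_trans th0 _.
  rewrite leNgt; apply/negP => /jmin; by rewrite leqNgt ltn_ord.
have hL := minor_lower (ltnW jn).
have hU := minor_upper jn; rewrite big_ord_recr /= in hU.
have Dpos : 0 < minors_supn j M.
  have : 0 < Klow * minors_supn j M by apply: lt_le_trans hL.
  by rewrite pmulr_rgt0 // Klow_gt0.
have [f [g [hf hg eD]]] := minors_attained Dpos.
pose F := rowsub f M.
pose K := kermx F^T.
have rK : (n - j <= \rank K)%N.
  rewrite /K mxrank_ker mxrank_tr; apply: leq_sub2l; exact: rank_leq_row.
pose r := (n - k + 1)%N.
exists ((pid_mx r : 'M[R]_(n, \rank K)) *m row_base K); split.
  have hr0 : (r <= n - j)%N by rewrite /r; clear -jk k0 kn; lia.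
  have hr1 : (r <= n)%N by apply: leq_trans hr0 (leq_subr _ _).
  have hr2 : (r <= \rank K)%N by apply: leq_trans hr0 rK.
  rewrite (mxrankMfree _ (row_base_free K)); exact: rank_pid_mx hr1 hr2.
move=> v hv.
have vK : (v^T <= K)%MS.
  apply: submx_trans hv _; apply: submx_trans (submxMl _ _) _.
  by rewrite eq_row_base submx_refl.
have hz : forall i, (M *m v) (f i) 0 = 0.
  move: vK; rewrite sub_kermx -trmx_mul => /eqP e i.
  move/matrixP: e => /(_ 0 i); rewrite !mxE => e2.
  rewrite -[RHS]e2; apply: eq_bigr => c _; by rewrite !mxE.
set x := mxsupn v.
have x0 : 0 <= x by apply: mxsupn_ge0.
apply: mxsupn_le; first by rewrite mulr_ge0 // invr_ge0 ltW.
move=> r0 z; rewrite (ord1 z).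
apply: (arith3 Klow_gt0 Kup_ge1 Ppos Lj0 x0 (normr_ge0 _) (ler0n _ n) _ (ltr0Sn _ n) C1 hL hU (ltW Pj)).
  by rewrite ler_nat.
rewrite eD mulrC -normrM schur_sum //.
apply: le_trans (ler_norm_sum _ _ _) _.
have eR : n%:R * x * minors_supn j.+1 M = \sum_(c < n) (x * minors_supn j.+1 M).
  by rewrite sumr_const card_ord -mulrA mulr_natl.
rewrite eR; apply: ler_sum => c _; rewrite normrM.
apply: ler_pM => //; first exact: mxsupn_ge.
exact: minors_any.
Qed.


End S7.

Theorem lemma3p2 (R : realType) (m n : nat) :
  exists (a A a' a'' : R), [/\ 0 < a, 0 < A, 0 < a', 0 < a'' &
  forall (M : 'M[R]_(m, n)) (Lam : nat -> R) (k : nat),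
    (0 < k)%N -> (k <= minn m n)%N -> singular_values M Lam ->
    [/\ (* (i) *)
        a * \prod_(i < k) Lam i <= minors_supn k M
        /\ minors_supn k M <= A * \prod_(i < k) Lam i,
        (* (ii) *)
        exists S : {set 'I_n}, #|S| = k /\
          forall v : 'cV[R]_n, (forall i, i \notin S -> v i 0 = 0) ->
            a' * mxsupn v * Lam k.-1 <= mxsupn (M *m v) &
        (* (iii) *)
        forall C : R, 1 <= C ->
          (exists X : 'M[R]_n, \rank X = (n - k + 1)%N /\
             forall v : 'cV[R]_n, (v^T <= X)%MS ->
               mxsupn (M *m v) <= C^-1 * mxsupn v)
          \/
          (exists S : {set 'I_n}, #|S| = k /\
             forall v : 'cV[R]_n, (forall i, i \notin S -> v i 0 = 0) ->
               a'' * C^-1 * mxsupn v <= mxsupn (M *m v))]].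
Proof.
exists (Klow R m n)^-1, (Kup R n), (ap R m n), (app R m n); split.
- by rewrite invr_gt0 Klow_gt0.
- exact: Kup_gt0.
- exact: ap_gt0.
- exact: app_gt0.
move=> M Lam k k0 kmn hsv.
have kn : (k <= n)%N by move: kmn; rewrite leq_min => /andP [].
split.
- have h1 := minor_upper hsv kn; have h2 := minor_lower hsv kn.
  split; last exact h1.
  by rewrite ler_pdivrMl ?Klow_gt0.
- have h := part2 hsv k0 kmn; exact h.
- move=> C C1; have h := part3 hsv k0 kmn C1; exact h.
Qed.
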